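(* Let $\mathcal{X}$ be a finite alphabet with $|\mathcal{X}|\ge 2$, let $w(i)>0$ for $i\in\mathcal{X}$ be arbitrary positive weights (not necessarily summing to $1$), and let $a>0$. Run the two-queue method with the exponential combining rule: the first queue initially contains all items of $\mathcal{X}$ arranged from head to tail in order of nondecreasing weight, and the second queue is initially empty. At each step, the two nodes of smallest weight are removed (each being at the head of one of the two queues), say with weights $w(j)$ and $w(k)$; they are made the two children of a new compound node of weight $a\,(w(j)+w(k))$, which is inserted at the tail of the second queue. This is repeated until a single node (the root) remains. Label the two edges from each internal node to its children with $0$ and $1$, and let $c(i)$ be the label sequence from the root to the leaf for item $i$, of length $n(i)$. Then the resulting code is optimal: its length vector $N=\{n(i)\}$ minimizes $L_a(W,N)$ over all binary prefix codes for $\mathcal{X}$.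
   Context: A binary prefix code for an alphabet $\mathcal{X}$ assigns to each $i\in\mathcal{X}$ a codeword $c(i)\in\{0,1\}^*$ such that no codeword is a prefix of another; $n(i)$ denotes the length of $c(i)$. For weights $W=\{w(i)\}$ and $a>0$, $a\neq 1$, the exponential penalty is $L_a(W,N)=\log_a \sum_{i\in\mathcal{X}} w(i)a^{n(i)}$ (for $a>1$ minimizing it means minimizing $\sum_i w(i)a^{n(i)}$, for $a<1$ it means maximizing that sum); for $a=1$ the penalty is taken to be $\sum_i w(i)n(i)$. *)

(* Defs.v *)
From HB Require Import structures.
From mathcomp Require Import all_boot all_order all_algebra.
From mathcomp Require Import all_classical all_reals all_analysis.
From Stdlib Require List.
Set Implicit Arguments. Unset Strict Implicit. Unset Printing Implicit Defensive.
Import Order.TTheory GRing.Theory Num.Theory.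
Local Open Scope ring_scope.

Inductive tree (m : nat) : Type :=
| Leaf of 'I_m
| Node of tree m & tree m.

Section Defs.
Variables (R : realType) (m : nat).

Fixpoint twt (a : R) (w : 'I_m -> R) (t : tree m) : R :=
  match t with
  | Leaf i => w i
  | Node l r => a * (twt a w l + twt a w r)
  end.

(* Label sequence from the root to leaf i (left edge = 0 = false,
   right edge = 1 = true), or None if i is not a leaf of t. *)
Fixpoint code_in (t : tree m) (i : 'I_m) : option (seq bool) :=
  match t with
  | Leaf j => if j == i then Some [::] else None
  | Node l r =>
      match code_in l i with
      | Some s => Some (false :: s)
      | None => omap (cons true) (code_in r i)
      end
  end.

Definition tree_code (t : tree m) (i : 'I_m) : seq bool := odflt [::] (code_in t i).

Definition prefix_code (c : 'I_m -> seq bool) : Prop :=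
  forall i j : 'I_m, i != j -> ~~ prefix (c i) (c j).

Definition La (a : R) (w : 'I_m -> R) (n : 'I_m -> nat) : R :=
  if a == 1 then \sum_i w i * (n i)%:R
  else ln (\sum_i w i * a ^+ n i) / ln a.

(* State of the two-queue method: (first queue, second queue), heads first. *)
Definition state := (seq (tree m) * seq (tree m))%type.

Definition pop_head (s s' : state) (x : tree m) : Prop :=
  (s.1 = x :: s'.1 /\ s.2 = s'.2) \/ (s.1 = s'.1 /\ s.2 = x :: s'.2).

Definition min_node (a : R) (w : 'I_m -> R) (s : state) (x : tree m) : Prop :=
  forall y, List.In y (s.1 ++ s.2) -> twt a w x <= twt a w y.

Definition tq_step (a : R) (w : 'I_m -> R) (s s'' : state) : Prop :=
  exists (x y : tree m) (s1 s2 : state),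
    [/\ pop_head s s1 x, min_node a w s x,
        pop_head s1 s2 y, min_node a w s1 y &
        s'' = (s2.1, rcons s2.2 (Node x y))].

Inductive tq_run (a : R) (w : 'I_m -> R) : state -> state -> Prop :=
| tq_refl s : tq_run a w s s
| tq_next s s' s'' : tq_step a w s s' -> tq_run a w s' s'' -> tq_run a w s s''.

(* Initial state: queue 1 = all items, head to tail by nondecreasing weight
   (the ordering s among ties is arbitrary), queue 2 empty. *)
Definition tq_init (s : seq 'I_m) : state := (map (@Leaf m) s, [::]).

Definition tq_result (a : R) (w : 'I_m -> R) (s : seq 'I_m) (t : tree m) : Prop :=
  exists fin : state, tq_run a w (tq_init s) fin /\ fin.1 ++ fin.2 = [:: t].

End Defs.

(* Main.v *)
Require Import Defs.
From HB Require Import structures.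
From mathcomp Require Import all_boot all_order all_algebra.
From mathcomp Require Import all_classical all_reals all_analysis.
From mathcomp Require Import zify ring lra.
From Stdlib Require Import Permutation.
Set Implicit Arguments. Unset Strict Implicit. Unset Printing Implicit Defensive.
Import Order.TTheory GRing.Theory Num.Theory.

Definition KS (L : nat) (ns : seq nat) : nat := sumn [seq 2 ^ (L - n) | n <- ns].
Definition mx (ns : seq nat) : nat := foldr maxn 0%N ns.
Definition kraft (ns : seq nat) : Prop :=
  exists L, all (fun n => n <= L)%N ns /\ (KS L ns <= 2 ^ L)%N.

Lemma mx_ge ns : all (fun n => n <= mx ns)%N ns.
Proof.
elim: ns => //= n ns IH; rewrite leq_maxl /=.
by apply: sub_all IH => k /leq_trans; apply; rewrite leq_maxr.
Qed.

Lemma mx_le ns L : all (fun n => n <= L)%N ns -> (mx ns <= L)%N.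
Proof. by elim: ns => //= n ns IH /andP [H1 /IH H2]; rewrite geq_max H1. Qed.

Lemma mx_in ns : ns != [::] -> mx ns \in ns.
Proof.
elim: ns => // n [|k ns] IH _; first by rewrite /mx /= maxn0 inE.
have -> : mx [:: n, k & ns] = maxn n (mx (k :: ns)) by [].
rewrite inE; case: (boolP (mx (k :: ns) <= n)%N) => H.
  by rewrite (maxn_idPl H) eqxx.
by rewrite -ltnNge in H; rewrite (maxn_idPr (ltnW H)) IH // orbT.
Qed.

Lemma KS_cons L n ns : KS L (n :: ns) = (2 ^ (L - n) + KS L ns)%N.
Proof. by []. Qed.

Lemma KS_lift L M ns : all (fun n => n <= M)%N ns -> (M <= L)%N ->
  KS L ns = (2 ^ (L - M) * KS M ns)%N.
Proof.
move=> H HML; elim: ns H => [|n ns IH] /=; first by rewrite muln0.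
move=> /andP [Hn /IH]; rewrite /KS /= -/(KS L ns) -/(KS M ns) => ->.
by rewrite mulnDr -expnD; congr (2 ^ _ + _)%N; lia.
Qed.

Lemma KS_perm L ns ns' : perm_eq ns ns' -> KS L ns = KS L ns'.
Proof. by move=> H; rewrite /KS; apply: perm_sumn; apply: perm_map. Qed.

Lemma kraft_perm ns ns' : perm_eq ns ns' -> kraft ns -> kraft ns'.
Proof.
move=> H [L [H1 H2]]; exists L; split; first by rewrite -(perm_all _ H).
by rewrite -(KS_perm _ H).
Qed.

Lemma kraft_at ns : kraft ns -> (KS (mx ns) ns <= 2 ^ mx ns)%N.
Proof.
move=> [L [H1 H2]]; have HM := mx_le H1.
move: H2; rewrite (KS_lift (mx_ge ns) HM).
have -> : (2 ^ L = 2 ^ (L - mx ns) * 2 ^ mx ns)%N by rewrite -expnD subnK.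
by rewrite leq_pmul2l // expn_gt0.
Qed.

Lemma KS0 ns : all (fun n => n == 0)%N ns -> KS 0 ns = size ns.
Proof. by elim: ns => //= n ns IH /andP [/eqP -> /IH]; rewrite /KS /= => ->. Qed.


Definition pf (u v : seq bool) := ~~ prefix u v && ~~ prefix v u.

Lemma sumn_filterC (T : Type) (f : T -> nat) (p : pred T) s :
  sumn (map f s) = sumn (map f (seq.filter p s)) + sumn (map f (seq.filter (predC p) s)).
Proof. elim: s => //= x s IH; case: (p x) => /=; rewrite IH; lia. Qed.

Lemma pf_nil_only (cs : seq (seq bool)) : [::] \in cs -> pairwise pf cs -> cs = [:: [::]].
Proof.
case: cs => // x s; rewrite inE pairwise_cons => /orP [/eqP <- | Hin] /andP [Ha _].
  by case: s Ha => //= y s; rewrite /pf prefix0s.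
by move/allP: Ha => /(_ _ Hin); rewrite /pf prefix0s andbF.
Qed.

Lemma kraft_prefix L (cs : seq (seq bool)) :
  all (fun u => size u <= L) cs -> pairwise pf cs ->
  sumn [seq 2 ^ (L - size u) | u <- cs] <= 2 ^ L.
Proof.
elim: L cs => [|L IH] cs Hs Hp.
  have H0 : all (fun u => u == [::]) cs.
    by apply: sub_all Hs => u; rewrite leqn0 size_eq0.
  case: cs Hs Hp H0 => // x s _ Hp /andP [/eqP Hx _].
  have -> // : x :: s = [:: [::]] by apply: pf_nil_only; rewrite // inE Hx eqxx.
case: (boolP ([::] \in cs)) => Hn.
  by rewrite (pf_nil_only Hn Hp) /= addn0 subn0.
rewrite (sumn_filterC _ (fun u => head false u)).
set c1 := seq.filter _ cs; set c2 := seq.filter _ cs.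
have key : forall c : seq (seq bool), (forall u, u \in c -> u \in cs) ->
   pairwise pf c -> (forall u v, u \in c -> v \in c -> head false u = head false v) ->
   sumn [seq 2 ^ (L.+1 - size u) | u <- c] <= 2 ^ L.
  move=> c Hsub Hpc Hh.
  have -> : [seq 2 ^ (L.+1 - size u) | u <- c] = [seq 2 ^ (L - size u) | u <- map behead c].
    rewrite -map_comp; apply/eq_in_map => u /Hsub Hu /=.
    by case: u Hu Hn => [->//|b u _ _] /=; rewrite subSS.
  apply: IH.
    rewrite all_map; apply/allP => u /[dup] Hu /Hsub /(allP Hs) /=.
    by case: u Hu => //= b u; rewrite ltnS.
  rewrite pairwise_map; apply: (@sub_in_pairwise _ (mem c) pf) Hpc; last exact: allss.
  move=> u v Hu Hv; rewrite /= /pf.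
  have := Hh u v Hu Hv.
  case: u Hu => [/Hsub Hu|b u _]; first by rewrite Hu in Hn.
  case: v Hv => [/Hsub Hv|b' v _]; first by rewrite Hv in Hn.
  by move=> /= <-; rewrite eqxx.
rewrite expnS mul2n -addnn; apply: leq_add; apply: key.
- by move=> u; rewrite mem_filter => /andP [].
- exact: pairwise_filter.
- by move=> u v; rewrite !mem_filter => /andP [-> _] /andP [-> _].
- by move=> u; rewrite mem_filter => /andP [].
- exact: pairwise_filter.
- by move=> u v; rewrite !mem_filter /= => /andP [/negPf -> _] /andP [/negPf -> _].
Qed.

Section Core.
Local Open Scope ring_scope.
Variables (R : realFieldType) (a : R) (phi : nat -> R) (kap : R -> R -> R).
Hypothesis phi_mono : forall n k, (n <= k)%N -> phi n <= phi k.
Hypothesis phi_merge : forall u v d,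
  u * phi d.+1 + v * phi d.+1 = a * (u + v) * phi d + kap u v.

Definition cost (A : seq (R * nat)) : R := \sum_(p <- A) p.1 * phi p.2.

Lemma cost_cons p A : cost (p :: A) = p.1 * phi p.2 + cost A.
Proof. by rewrite /cost big_cons. Qed.

Lemma cost_perm A B : perm_eq A B -> cost A = cost B.
Proof. exact: perm_big. Qed.

Lemma decomp x l (A : seq (R * nat)) : perm_eq (map fst A) (x :: l) ->
  exists k C, perm_eq A ((x, k) :: C) /\ perm_eq (map fst C) l.
Proof.
move=> H.
have : x \in map fst A by rewrite (perm_mem H) inE eqxx.
case/mapP => p Hp Ex; exists p.2, (rem p A).
have HA : perm_eq A ((x, p.2) :: rem p A) by rewrite Ex -surjective_pairing perm_to_rem.
split => //.
have H2 : perm_eq (x :: map fst (rem p A)) (x :: l).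
  by apply: seq.perm_trans H; rewrite perm_sym; exact: (perm_map fst HA).
by rewrite perm_cons in H2.
Qed.

Lemma reduce (A : seq (R * nat)) :
  (forall p, p \in A -> 0 <= p.1) -> (1 < size A)%N -> kraft (map snd A) ->
  exists A', [/\ perm_eq (map fst A') (map fst A), kraft (map snd A'),
    cost A' <= cost A & (1 < count_mem (mx (map snd A')) (map snd A'))%N].
Proof.
have [k Hk] : exists k, (sumn (map snd A) < k)%N by exists (sumn (map snd A)).+1.
elim: k A Hk => // k IH A Hk Hpos Hsz Hkr.
set M := mx (map snd A).
case: (ltnP 1 (count_mem M (map snd A))) => Hc.
  by exists A; split.
have HMin : M \in map snd A by apply: mx_in; case: (A) Hsz.
case/mapP: HMin => p Hp EM.
have HA := perm_to_rem Hp; set C := rem p A in HA.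
have HsA : perm_eq (map snd A) (M :: map snd C) by rewrite EM (perm_map snd HA).
have HcC : count_mem M (map snd C) = 0%N.
  by move: Hc; rewrite (permP HsA) /= eqxx; lia.
have HltC : all (fun n => n < M)%N (map snd C).
  apply/allP => n Hn; have := allP (mx_ge (map snd A)) n.
  rewrite (perm_mem HsA) inE Hn orbT => /(_ isT); rewrite leq_eqVlt -/M.
  case/orP => // /eqP En; move: HcC => /eqP; rewrite -leqn0 leqNgt -has_count.
  by rewrite has_pred1 -En Hn.
have HK := kraft_at Hkr; rewrite -/M (KS_perm _ HsA) KS_cons subnn expn0 in HK.
case EM' : M => [|M'].
  move: Hsz; rewrite -(size_map snd) (perm_size HsA) /= => Hsz.
  move: HK; rewrite EM' KS0; first by rewrite expn0 add1n ltnS leqn0 size_eq0 => /eqP E; rewrite E in Hsz.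
  by apply/allP => n /(allP HltC); rewrite EM'.
have HleC : all (fun n => n <= M')%N (map snd C).
  by apply: sub_all HltC => n; rewrite EM'.
rewrite EM' (KS_lift HleC (leqnSn M')) subSn // subnn expn1 in HK.
set A1 := (p.1, M') :: C.
have H1 : perm_eq (map fst A1) (map fst A).
  by rewrite perm_sym (perm_map fst HA).
have H2 : kraft (map snd A1).
  exists M'.+1; split.
    by rewrite /= leqnSn /=; apply: sub_all HleC => n Hn; apply: leq_trans Hn _.
  rewrite /= KS_cons (KS_lift HleC (leqnSn M')) subSn // subnn expn1 expnS; move: HK; rewrite expnS; set K := KS M' _; set X := (2 ^ M')%N; lia.
have H3 : cost A1 <= cost A.
  rewrite (cost_perm HA) /A1 !cost_cons /= lerD2r -EM EM'.
  apply: ler_wpM2l; first exact: Hpos.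
  exact: phi_mono.
have Hk1 : (sumn (map snd A1) < k)%N.
  move: Hk; rewrite (perm_sumn HsA) /= EM'; set K := sumn _; lia.
have Hpos1 : forall q, q \in A1 -> 0 <= q.1.
  move=> q; rewrite inE => /orP [/eqP -> /= | HqC]; first exact: Hpos.
  by apply: Hpos; rewrite (perm_mem HA) inE HqC orbT.
have Hsz1 : (1 < size A1)%N.
  by rewrite -(size_map fst) (perm_size H1) size_map.
have [A' [H1' H2' H3' H4']] := IH A1 Hk1 Hpos1 Hsz1 H2.
exists A'; split => //; first exact: seq.perm_trans H1' H1.
exact: le_trans H3' H3.
Qed.


Lemma exch v k (D : seq (R * nat)) M :
  (forall p, p \in D -> v <= p.1) -> (k <= M)%N -> (k = M \/ M \in map snd D) ->
  exists D', [/\ perm_eq (map fst D') (map fst D),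
     perm_eq (M :: map snd D') (k :: map snd D) &
     cost ((v, M) :: D') <= cost ((v, k) :: D)].
Proof.
move=> Hv HkM [-> | HM]; first by exists D; split.
case/mapP: HM => q Hq EM.
have HD := perm_to_rem Hq; set C := rem q D in HD.
exists ((q.1, k) :: C); split.
- by rewrite perm_sym (perm_map fst HD).
- have E1 : perm_eq (k :: map snd (q :: C)) (k :: map snd D).
    by rewrite perm_cons perm_sym; exact: perm_map.
  apply: seq.perm_trans E1; rewrite /= EM.
  by rewrite -[[:: q.2, k & _]]/([:: q.2] ++ [:: k] ++ _) perm_catCA.
- rewrite !cost_cons (cost_perm HD) cost_cons /= -EM.
  have H1 : 0 <= q.1 - v by rewrite subr_ge0; exact: Hv.
  have H2 : 0 <= phi M - phi k by rewrite subr_ge0; exact: phi_mono.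
  have := mulr_ge0 H1 H2; rewrite mulrBl !mulrBr => H.
  lra.
Qed.

Lemma merge x y rest (A : seq (R * nat)) :
  0 < x -> x <= y -> (forall u, u \in rest -> y <= u) ->
  perm_eq (map fst A) (x :: y :: rest) -> kraft (map snd A) ->
  exists A', [/\ perm_eq (map fst A') (a * (x + y) :: rest), kraft (map snd A') &
    cost A' + kap x y <= cost A].
Proof.
move=> Hx Hxy Hy HA HkA.
have Hall : forall u, u \in x :: y :: rest -> x <= u.
  move=> u; rewrite !inE => /orP [/eqP -> // | /orP [/eqP -> // | /Hy]].
  exact: le_trans.
have Hp0 : forall p, p \in A -> 0 <= p.1.
  move=> p Hp; apply: (le_trans (ltW Hx)); apply: Hall.
  by rewrite -(perm_mem HA); apply: map_f.
have Hs0 : (1 < size A)%N by rewrite -(size_map fst) (perm_size HA).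
have [A1 [HA1 Hk1 Hc1 Hcnt]] := @reduce A Hp0 Hs0 HkA.
set M := mx (map snd A1) in Hcnt.
have HMge : forall n, n \in map snd A1 -> (n <= M)%N by apply/allP; exact: mx_ge.
have [k [D [HAD HD]]] := decomp (seq.perm_trans HA1 HA).
have HsAD : perm_eq (map snd A1) (k :: map snd D) by exact: (perm_map snd HAD).
have X1 : forall p, p \in D -> x <= p.1.
  move=> p Hp; apply: Hall; rewrite inE; apply/orP; right.
  by rewrite -(perm_mem HD); apply: map_f.
have X2 : (k <= M)%N by apply: HMge; rewrite (perm_mem HsAD) inE eqxx.
have X3 : k = M \/ M \in map snd D.
  case: (eqVneq k M) => [-> | HkM]; [by left | right].
  move: Hcnt; rewrite (permP HsAD) /= (negPf HkM) add0n => H.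
  by rewrite -has_pred1 has_count; apply: leq_trans H.
have [D' [HD'1 HD'2 HD'3]] := exch X1 X2 X3.
have HsD' : perm_eq (M :: map snd D') (map snd A1) by apply: seq.perm_trans HD'2 _; rewrite perm_sym.
have [k' [E [HDE HE]]] := decomp (seq.perm_trans HD'1 HD).
have HsDE : perm_eq (map snd D') (k' :: map snd E) by exact: (perm_map snd HDE).
have Y1 : forall p, p \in E -> y <= p.1.
  by move=> p Hp; apply: Hy; rewrite -(perm_mem HE); apply: map_f.
have Y2 : (k' <= M)%N.
  by apply: HMge; rewrite -(perm_mem HsD') inE (perm_mem HsDE) inE eqxx orbT.
have Y3 : k' = M \/ M \in map snd E.
  case: (eqVneq k' M) => [-> | HkM]; [by left | right].
  move: Hcnt; rewrite -(permP HsD') /= eqxx (permP HsDE) /= (negPf HkM).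
  by rewrite add0n add1n ltnS -has_pred1 has_count.
have [E' [HE'1 HE'2 HE'3]] := exch Y1 Y2 Y3.
set A3 := (x, M) :: (y, M) :: E'.
have HsA3 : perm_eq (map snd A3) (map snd A1).
  have S1 : perm_eq (M :: map snd E') (map snd D').
    by apply: seq.perm_trans HE'2 _; rewrite perm_sym.
  have S2 : perm_eq (map snd A3) (M :: map snd D') by rewrite /= perm_cons.
  exact: seq.perm_trans S2 HsD'.
have Hc3 : cost A3 <= cost A1.
  rewrite (cost_perm HAD); apply: le_trans HD'3.
  rewrite /A3 !cost_cons /= lerD2l (cost_perm HDE).
  by move: HE'3; rewrite !cost_cons.
have Hk3 : kraft (map snd A3) by apply: kraft_perm Hk1; rewrite perm_sym.
have HKM := kraft_at Hk1; rewrite -/M -(KS_perm _ HsA3) /A3 /= !KS_cons subnn expn0 in HKM.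
case EM : M HKM => [|M'] HKM.
  by rewrite expn0 in HKM. 
have HE'le : all (fun n => n <= M)%N (map snd E').
  apply/allP => n Hn; apply: HMge; rewrite -(perm_mem HsA3) /= !inE Hn.
  by rewrite !orbT.
exists ((a * (x + y), M') :: E'); split.
- rewrite /= perm_cons; apply: seq.perm_trans HE'1 HE.
- exists M; split.
    by rewrite /= EM leqnSn /= -EM.
  rewrite EM /= KS_cons subSn // subnn expn1.
  by move: HKM; rewrite addnA.
- rewrite cost_cons /= addrAC -phi_merge -EM.
  apply: le_trans (le_trans Hc3 Hc1).
  by rewrite /A3 !cost_cons /= addrA.
Qed.

End Core.


Section Gen.
Variable T : Type.

Lemma In_cat (x : T) s1 s2 : List.In x (s1 ++ s2) <-> List.In x s1 \/ List.In x s2.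
Proof. by elim: s1 => /= [|y s1 IH]; [tauto | move: IH; tauto]. Qed.

Lemma Perm_mid (x : T) s1 s2 : Permutation (s1 ++ x :: s2) (x :: s1 ++ s2).
Proof.
elim: s1 => /= [|y s1 IH]; first exact: Permutation_refl.
apply: Permutation_trans (Permutation.perm_skip y IH) _.
exact: Permutation.perm_swap.
Qed.

Lemma Perm_map_eq (U : eqType) (f : T -> U) F G :
  Permutation F G -> perm_eq (map f F) (map f G).
Proof.
elim => //= [x l l' _ IH | x y l | l l' l'' _ IH1 _ IH2].
- by rewrite perm_cons.
- by rewrite -[[:: f y, f x & _]]/([:: f y] ++ [:: f x] ++ _) perm_catCA.
- exact: seq.perm_trans IH1 IH2.
Qed.

Lemma Perm_size (F G : seq T) : Permutation F G -> size F = size G.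
Proof. by elim => //= [x l l' _ -> | l l' l'' _ -> _ ->]. Qed.

Lemma allIn (p : pred T) s y : all p s -> List.In y s -> p y.
Proof. by elim: s => //= x s IH /andP [Hx Hs] [<- // | /IH]; apply. Qed.

Lemma inmap (U : eqType) (f : T -> U) u F : u \in map f F -> exists x, List.In x F /\ u = f x.
Proof.
elim: F => //= x F IH; rewrite inE => /orP [/eqP -> | /IH [y [Hy ->]]].
  by exists x; split; [left|].
by exists y; split; [right|].
Qed.

Lemma sum_perm (R : nmodType) (f : T -> R) F G :
  Permutation F G -> (\sum_(x <- F) f x = \sum_(x <- G) f x)%R.
Proof.
elim => //= [x l l' _ IH | x y l | l l' l'' _ IH1 _ IH2].
- by rewrite !big_cons IH.
- by rewrite !big_cons GRing.addrCA.
- by rewrite IH1 IH2.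
Qed.

Lemma sorted_rcons2 (e : rel T) (l : seq T) (Z z : T) :
  sorted e (rcons l Z) -> e Z z -> sorted e (rcons (rcons l Z) z).
Proof.
case: l => [|h l] /=; first by move=> _ ->.
by rewrite !rcons_path last_rcons => -> ->.
Qed.

End Gen.

Section Trees.
Local Open Scope ring_scope.
Variables (R : realType) (m : nat) (a : R) (w : 'I_m -> R).
Variables (phi : nat -> R) (kap : R -> R -> R).
Hypothesis phi_mono : forall n k, (n <= k)%N -> phi n <= phi k.
Hypothesis phi_merge : forall u v d,
  u * phi d.+1 + v * phi d.+1 = a * (u + v) * phi d + kap u v.
Hypothesis Hw : forall i, 0 < w i.
Hypothesis Ha : 0 < a.

Local Notation tw := (twt a w).

Fixpoint leaves (t : tree m) : seq 'I_m :=
  match t with Leaf i => [:: i] | Node l r => leaves l ++ leaves r end.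

Fixpoint ic (t : tree m) : R :=
  match t with Leaf _ => 0 | Node l r => ic l + ic r + kap (tw l) (tw r) end.

Definition Fleaves (F : seq (tree m)) := flatten (map leaves F).

Lemma twt_pos t : 0 < tw t.
Proof. elim: t => [i|l Hl r Hr] /=; [exact: Hw | apply: mulr_gt0 => //; exact: addr_gt0]. Qed.

Lemma code_some t i : isSome (code_in t i) = (i \in leaves t).
Proof.
elim: t => [j|l IHl r IHr] /=; first by rewrite inE eq_sym; case: eqP.
rewrite mem_cat -IHl -IHr; case: (code_in l i) => //=; by case: (code_in r i).
Qed.

Lemma tc_l l r i : i \in leaves l -> tree_code (Node l r) i = false :: tree_code l i.
Proof.
rewrite -code_some /tree_code /=; by case: (code_in l i).
Qed.

Lemma tc_r l r i : i \notin leaves l -> i \in leaves r ->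
  tree_code (Node l r) i = true :: tree_code r i.
Proof.
rewrite -!code_some /tree_code /=; case: (code_in l i) => //= _.
by case: (code_in r i).
Qed.

Lemma disj l r x : ~~ has (mem (leaves l)) (leaves r) -> x \in leaves r -> x \notin leaves l.
Proof.
move=> H Hx; apply/negP => Hxl; move/negP: H; apply; apply/hasP; by exists x.
Qed.

Lemma tree_cost t d : uniq (leaves t) ->
  \sum_(i <- leaves t) w i * phi (d + size (tree_code t i)) = tw t * phi d + ic t.
Proof.
elim: t d => [j|l IHl r IHr] d /=.
  by rewrite big_seq1 /tree_code /= eqxx addn0 addr0.
rewrite cat_uniq => /and3P [Ul Hlr Ur]; rewrite big_cat /=.
rewrite (eq_big_seq (fun i => w i * phi (d.+1 + size (tree_code l i)))); last first.
  by move=> i Hi; rewrite tc_l //= addnS addSn.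
rewrite [X in _ + X = _](eq_big_seq (fun i => w i * phi (d.+1 + size (tree_code r i)))); last first.
  by move=> i Hi; rewrite tc_r //= ?addnS ?addSn //; apply: disj Hlr Hi.
rewrite IHl // IHr // addrACA phi_merge; ring.
Qed.

Lemma tree_prefix t i j : uniq (leaves t) -> i \in leaves t -> j \in leaves t -> i != j ->
  ~~ prefix (tree_code t i) (tree_code t j).
Proof.
elim: t => [k|l IHl r IHr] /=.
  by rewrite !inE => _ /eqP -> /eqP ->; rewrite eqxx.
rewrite cat_uniq !mem_cat => /and3P [Ul Hlr Ur].
case/orP => Hi; case/orP => Hj Hij.
- by rewrite !tc_l //= ?prefix_cons ?eqxx /=; apply: IHl.
- by rewrite tc_l // tc_r //; apply: disj Hlr Hj.
- by rewrite tc_r ?tc_l //; apply: disj Hlr Hi.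
- rewrite !tc_r //= ?prefix_cons ?eqxx /=; first exact: IHr.
  + exact: disj Hlr Hj.
  + exact: disj Hlr Hi.
Qed.

Lemma Perm_leaves F G : Permutation F G -> perm_eq (Fleaves F) (Fleaves G).
Proof.
rewrite /Fleaves; elim => //= [x l l' _ IH | x y l | l l' l'' _ IH1 _ IH2].
- by rewrite perm_cat2l.
- by rewrite perm_catCA.
- exact: seq.perm_trans IH1 IH2.
Qed.

Lemma pop_perm (s s1 : state m) x : pop_head s s1 x ->
  Permutation (s.1 ++ s.2) (x :: s1.1 ++ s1.2).
Proof. by case=> [[-> ->] | [-> ->]]; [exact: Permutation_refl | exact: Perm_mid]. Qed.

Lemma rcons_perm (F : seq (tree m)) z : Permutation (rcons F z) (z :: F).
Proof. by have := Perm_mid z F [::]; rewrite cats0 cats1. Qed.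

Lemma step_perm (s s'' : state m) : tq_step a w s s'' ->
  exists x y (s2 : state m), [/\ Permutation (s.1 ++ s.2) (x :: y :: s2.1 ++ s2.2),
    Permutation (s''.1 ++ s''.2) (Node x y :: s2.1 ++ s2.2),
    forall u, List.In u (s.1 ++ s.2) -> tw x <= tw u &
    forall u, List.In u (y :: s2.1 ++ s2.2) -> tw y <= tw u].
Proof.
case=> x [y [s1 [s2 [Hp1 Hm1 Hp2 Hm2 ->]]]].
have P1 := pop_perm Hp1; have P2 := pop_perm Hp2.
exists x, y, s2; split => //.
- exact: Permutation_trans P1 (Permutation.perm_skip x P2).
- rewrite /= -cats1 catA cats1; exact: rcons_perm.
- move=> u Hu; apply: Hm2; exact: Permutation_in (Permutation_sym P2) Hu.
Qed.

Lemma run_opt (s fin : state m) t : tq_run a w s fin -> fin.1 ++ fin.2 = [:: t] ->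
  forall A : seq (R * nat), perm_eq (map fst A) (map tw (s.1 ++ s.2)) ->
  kraft (map snd A) ->
  tw t * phi 0 + ic t <= cost phi A + \sum_(T <- s.1 ++ s.2) ic T.
Proof.
elim => [s0 | s0 s' s'' Hst Hrun IH] Hfin A HA Hk.
  rewrite Hfin big_seq1 in HA *.
  case: A HA Hk => [|p [|q A]] HA Hk; have := perm_size HA => //= Hs.
  have := perm_mem HA (tw t); rewrite !inE eqxx /= => /eqP Ep.
  rewrite /cost big_seq1 lerD2r -Ep.
  apply: ler_wpM2l; [exact: ltW (twt_pos t) | exact: phi_mono].
have [x [y [s2 [P12 P3 Hmx Hmy]]]] := step_perm Hst.
set rest := map tw (s2.1 ++ s2.2).
have HA' : perm_eq (map fst A) (tw x :: tw y :: rest).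
  by apply: seq.perm_trans HA _; exact: (Perm_map_eq tw P12).
have Hx := twt_pos x.
have Hxy : tw x <= tw y.
  by apply: Hmx; apply: Permutation_in (Permutation_sym P12) _; right; left.
have Hy : forall u, u \in rest -> tw y <= u.
  by move=> u /inmap [T [HT ->]]; apply: Hmy; right.
have [A' [HA'1 HA'2 HA'3]] := merge phi_mono phi_merge Hx Hxy Hy HA' Hk.
have HA'' : perm_eq (map fst A') (map tw (s'.1 ++ s'.2)).
  apply: seq.perm_trans HA'1 _; rewrite perm_sym.
  exact: (Perm_map_eq tw P3).
have := IH Hfin A' HA'' HA'2.
rewrite (sum_perm ic P3) (sum_perm ic P12) !big_cons /=.
move: HA'3; set K := kap _ _; set S := \sum_(_ <- _) _; lra.
Qed.

Lemma run_leaves (s fin : state m) : tq_run a w s fin ->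
  perm_eq (Fleaves (fin.1 ++ fin.2)) (Fleaves (s.1 ++ s.2)).
Proof.
elim => [s0 | s0 s' s'' Hst Hrun IH]; first exact: perm_refl.
apply: seq.perm_trans IH _.
have [x [y [s2 [P12 P3 _ _]]]] := step_perm Hst.
apply: seq.perm_trans (Perm_leaves P3) _.
rewrite perm_sym; apply: seq.perm_trans (Perm_leaves P12) _.
by rewrite /Fleaves /= catA.
Qed.


Definition le_t : rel (tree m) := fun u v => tw u <= tw v.

Definition Inv (s : state m) := [/\ sorted le_t s.1, sorted le_t s.2 &
  forall q Z, s.2 = rcons q Z -> forall u v, List.In u (s.1 ++ q) ->
    List.In v (s.1 ++ q) -> tw Z <= a * (tw u + tw v)].

Lemma le_t_trans : transitive le_t.
Proof. by move=> y x z; exact: le_trans. Qed.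

Lemma sorted_min h t : sorted le_t (h :: t) -> forall y, List.In y (h :: t) -> tw h <= tw y.
Proof.
move=> /= Hp y [<- // | Hy].
exact: (allIn (order_path_min le_t_trans Hp) Hy).
Qed.

Lemma pick (s : state m) : sorted le_t s.1 -> sorted le_t s.2 -> s.1 ++ s.2 <> [::] ->
  exists x (s1 : state m), [/\ pop_head s s1 x, min_node a w s x,
    sorted le_t s1.1 & sorted le_t s1.2].
Proof.
case: s => [[|h1 t1] [|h2 t2]] /= S1 S2 Hne //.
- exists h2, ([::], t2); split => //=; first by right.
    by rewrite /min_node /= => y Hy; apply: sorted_min S2 _ Hy.
  exact: path_sorted S2.
- exists h1, (t1, [::]); split => //=; first by left.
    by rewrite /min_node /= cats0 => y Hy; apply: sorted_min S1 _ Hy.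
  exact: path_sorted S1.
- case: (boolP (tw h1 <= tw h2)) => H.
    exists h1, (t1, h2 :: t2); split => //=; first by left.
      move=> y /In_cat [Hy | Hy]; first exact: sorted_min S1 _ Hy.
      by apply: le_trans H _; apply: sorted_min S2 _ Hy.
    exact: path_sorted S1.
  exists h2, (h1 :: t1, t2); split => //=; first by right.
    move=> y /In_cat [Hy | Hy]; last exact: sorted_min S2 _ Hy.
    rewrite -ltNge in H; apply: le_trans (ltW H) _; exact: sorted_min S1 _ Hy.
  exact: path_sorted S2.
Qed.

Lemma pop_rcons (s s1 : state m) x q Z : pop_head s s1 x -> s1.2 = rcons q Z ->
  exists q0, [/\ s.2 = rcons q0 Z, List.In x (s.1 ++ q0) &
    forall u, List.In u (s1.1 ++ q) -> List.In u (s.1 ++ q0)].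
Proof.
case=> [[E1 E2] | [E1 E2]] Eq.
  exists q; split; first by rewrite E2.
    by rewrite E1; left.
  by move=> u Hu; rewrite E1; right.
exists (x :: q); split; first by rewrite E2 Eq.
  by apply/In_cat; right; left.
move=> u /In_cat [Hu | Hu]; apply/In_cat; rewrite E1; [by left | by right; right].
Qed.

Lemma run_exists n : forall s : state m, size (s.1 ++ s.2) = n.+1 -> Inv s ->
  exists t (fin : state m), tq_run a w s fin /\ fin.1 ++ fin.2 = [:: t].
Proof.
elim: n => [|n IH] s Hsz [S1 S2 Hinv].
  case E: (s.1 ++ s.2) Hsz => [|t [|]] // _.
  by exists t, s; split => //; apply: tq_refl.
have Hne : s.1 ++ s.2 <> [::] by move=> E; rewrite E in Hsz.
have [x [s1 [Hp1 Hm1 S11 S12]]] := pick S1 S2 Hne.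
have P1 := pop_perm Hp1.
have Hsz1 : size (s1.1 ++ s1.2) = n.+1.
  by move: (Perm_size P1); rewrite Hsz /= => [[]].
have Hne1 : s1.1 ++ s1.2 <> [::] by move=> E; rewrite E in Hsz1.
have [y [s2 [Hp2 Hm2 S21 S22]]] := pick S11 S12 Hne1.
have P2 := pop_perm Hp2.
set s'' : state m := (s2.1, rcons s2.2 (Node x y)).
have Hst : tq_step a w s s'' by exists x, y, s1, s2; split.
have Hsz'' : size (s''.1 ++ s''.2) = n.+1.
  have := Perm_size P2; rewrite Hsz1 /= size_cat => [[E]].
  by rewrite /= size_cat size_rcons; lia.
have Hinv'' : Inv s''.
  split.
  - exact: S21.
  - rewrite /=; case/lastP E2: (s2.2) => [|q Z] //.
    apply: sorted_rcons2; first by rewrite -E2.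
    have [q1 [E1 Hy1 Hinc1]] := pop_rcons Hp2 E2.
    have [q0 [E0 Hx0 Hinc0]] := pop_rcons Hp1 E1.
    exact: Hinv q0 Z E0 x y Hx0 (Hinc0 y Hy1).
  - move=> q Z /= /rcons_inj [Eq EZ] u v Hu Hv; rewrite -EZ /=.
    rewrite -Eq in Hu Hv.
    apply: ler_wpM2l; first exact: ltW.
    apply: lerD.
      apply: Hm1; apply: Permutation_in (Permutation_sym P1) _; right.
      by apply: Permutation_in (Permutation_sym P2) _; right.
    by apply: Hm2; apply: Permutation_in (Permutation_sym P2) _; right.
have [t [fin [Hrun Hfin]]] := IH s'' Hsz'' Hinv''.
by exists t, fin; split => //; apply: tq_next Hst Hrun.
Qed.

Lemma flat_leaf (s : seq 'I_m) : Fleaves (map (@Leaf m) s) = s.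
Proof. by elim: s => //= i s IH; rewrite /Fleaves /= -/(Fleaves _) IH. Qed.

End Trees.

Lemma sum_enum (R : nmodType) m (F : 'I_m -> R) (l : seq 'I_m) :
  perm_eq l (enum 'I_m) -> (\sum_(i <- l) F i = \sum_i F i)%R.
Proof. by move=> H; rewrite (perm_big _ H) big_enum. Qed.


Local Open Scope ring_scope.

Theorem lemma1 (R : realType) (m : nat) (w : 'I_m -> R) (a : R) :
  (2 <= m)%N -> (forall i, 0 < w i) -> 0 < a ->
  forall s : seq 'I_m,
    perm_eq s (enum 'I_m) -> sorted [rel i j | w i <= w j] s ->
    (exists t : tree m, tq_result a w s t) /\
    (forall t : tree m, tq_result a w s t ->
       prefix_code (tree_code t) /\
       forall c : 'I_m -> seq bool, prefix_code c ->
         La a w (fun i => size (tree_code t i)) <= La a w (fun i => size (c i))).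
Proof.
move=> Hm Hw Ha s Hperm Hsort.
pose phi n := if a == 1 then n%:R else if 1 < a then a ^+ n else - a ^+ n.
pose kap (u v : R) := if a == 1 then u + v else 0.
have phi_mono : forall n k, (n <= k)%N -> phi n <= phi k.
  move=> n k Hnk; rewrite /phi; case: eqP => _; first by rewrite ler_nat.
  case: (boolP (1 < a)) => H1; first exact: (ler_weXn2l (ltW H1)).
  rewrite lerN2; apply: (ler_wiXn2l (ltW Ha)) => //; by rewrite leNgt.
have phi_merge : forall u v d, u * phi d.+1 + v * phi d.+1 = a * (u + v) * phi d + kap u v.
  move=> u v d; rewrite /phi /kap; case: eqP => [->|_].
    by rewrite -addn1 natrD; ring.
  by case: ifP => _; rewrite exprS; ring.
have Hsz : size ((tq_init s).1 ++ (tq_init s).2) = m.-1.+1.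
  by rewrite /= cats0 size_map (perm_size Hperm) size_enum_ord; lia.
have Hinit : Inv a w (tq_init s).
  split => //=.
  - by rewrite sorted_map; apply: sub_sorted Hsort.
  - by case.
split.
  have [t [fin [Hrun Hfin]]] := run_exists Ha Hsz Hinit.
  by exists t, fin.
move=> t [fin [Hrun Hfin]].
have HL := run_leaves Hrun; rewrite Hfin /tq_init /= cats0 flat_leaf /Fleaves /= cats0 in HL.
have HLt : perm_eq (leaves t) (enum 'I_m) by apply: seq.perm_trans HL Hperm.
have Hut : uniq (leaves t) by rewrite (perm_uniq HLt) enum_uniq.
have Hin : forall i, i \in leaves t by move=> i; rewrite (perm_mem HLt) mem_enum.
split.
  by move=> i j Hij; apply: tree_prefix.
move=> c Hc.
have Hus : uniq s by rewrite (perm_uniq Hperm) enum_uniq.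
set A := [seq (w i, size (c i)) | i <- s].
have HA : perm_eq (map fst A) (map (twt a w) ((tq_init s).1 ++ (tq_init s).2)).
  by rewrite /A /= cats0 -!map_comp.
have HkA : kraft (map snd A).
  exists (mx (map snd A)); split; first exact: mx_ge.
  have -> : (KS (mx (map snd A)) (map snd A) =
    sumn [seq 2 ^ (mx (map snd A) - size u) | u <- map c s])%N.
    by rewrite /KS /A -!map_comp.
  apply: kraft_prefix.
    rewrite all_map; apply/allP => i Hi /=.
    by apply: (allP (mx_ge (map snd A))); rewrite /A -map_comp; apply: map_f.
  rewrite pairwise_map; move: Hus; rewrite uniq_pairwise; apply: sub_pairwise.
  by move=> i j /= Hij; rewrite /pf !Hc // eq_sym.
have := run_opt phi_mono phi_merge Hw Ha Hrun Hfin HA HkA.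
rewrite /= cats0 big_map big1 ?addr0 // -(tree_cost w phi_merge 0 Hut).
rewrite /cost /A big_map !(sum_enum _ HLt) !(sum_enum _ Hperm) /=.
move=> Hkey.
(* Hkey : \sum_i w i * phi (size (tree_code t i)) <= \sum_i w i * phi (size (c i)) *)
have Hpos : forall n : 'I_m -> nat, 0 < \sum_i w i * a ^+ n i.
  move=> n; have H0 : (0 < m)%N by lia.
  rewrite (bigD1 (Ordinal H0)) //=.
  have H1 : 0 < w (Ordinal H0) * a ^+ n (Ordinal H0).
    by apply: mulr_gt0 => //; exact: exprn_gt0.
  have H2 : 0 <= \sum_(i | i != Ordinal H0) w i * a ^+ n i.
    by apply: sumr_ge0 => i _; apply: mulr_ge0; [exact: ltW | exact: exprn_ge0 (ltW Ha)].
  lra.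
rewrite /La; case: eqP => Ea.
  by move: Hkey; rewrite /phi Ea eqxx.
have Ea1 : (a == 1) = false by apply/eqP.
move: Hkey; rewrite /phi Ea1.
case: (boolP (1 < a)) => H1 Hkey.
  apply: ler_wpM2r; first by rewrite invr_ge0; apply: ltW; exact: ln_gt0.
  by rewrite ler_ln ?posrE ?Hpos.
have Ha1 : a < 1 by rewrite lt_neqAle Ea1 /= leNgt.
apply: ler_wnM2r; first by rewrite invr_le0; apply: ltW; apply: ln_lt0; rewrite Ha.
rewrite ler_ln ?posrE ?Hpos //.
move: Hkey; under eq_bigr do rewrite mulrN; under [X in _ <= X -> _]eq_bigr do rewrite mulrN.
by rewrite !sumrN lerN2.
Qed.
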